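(* Let $m,a\in\mathbb N$ and let $\mathfrak o$ be a compact discrete valuation ring. Let $V^*_{m,a}(\mathfrak o)$ be the $\mathfrak o$-representation of the dual star quiver $\mathsf S^*_a$ in which every vertex is represented by $\mathfrak o^m$ and every arrow by the identity map. Then $$\zeta_{V^*_{m,a}(\mathfrak o)}(s)=\zeta_{\mathfrak o^m}(as)\,\zeta_{\mathfrak o^m}(s)^{a-1}.$$
   Context: The dual star quiver $\mathsf S^*_a$ has vertices $v_1,\dots,v_a$ and arrows $v_j\to v_1$ for $j=2,\dots,a$. Subrepresentations of a representation $(\mathcal L_\iota,f_\phi)$ are tuples of submodules $\Lambda_\iota\le\mathcal L_\iota$ with $f_\phi(\Lambda_{\mathrm{tail}(\phi)})\subseteq\Lambda_{\mathrm{head}(\phi)}$, and $\zeta_V(s)=\sum_{V'}\prod_\iota|\mathcal L_\iota:\Lambda_\iota|^{-s}$ over finite-index subrepresentations. $\zeta_{\mathfrak o^m}(s)=\sum_{U}|\mathfrak o^m:U|^{-s}$ sums over all $\mathfrak o$-submodules $U$ of finite index in $\mathfrak o^m$. *)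

(* Defs.v *)
From HB Require Import structures.
From mathcomp Require Import all_boot all_order all_algebra.
From mathcomp Require Import boolp classical_sets reals constructive_ereal ereal esum exp.
Set Implicit Arguments. Unset Strict Implicit. Unset Printing Implicit Defensive.
Import Order.TTheory GRing.Theory Num.Theory.
Local Open Scope ring_scope.
Local Open Scope classical_set_scope.

Definition dvdr {R : comRingType} (x y : R) : Prop := exists c, y = c * x.

(* pi is a uniformizer: R is a DVR with maximal ideal (pi) *)
Definition is_uniformizer (R : idomainType) (pi : R) : Prop :=
  [/\ pi != 0, pi \isn't a GRing.unit &
      forall x : R, x != 0 -> exists (u : R) (n : nat),
        u \is a GRing.unit /\ x = u * pi ^+ n].

Definition adic_open (R : idomainType) (pi : R) (U : set R) : Prop :=
  forall x, U x -> exists n : nat, forall y, dvdr (pi ^+ n) (y - x) -> U y.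

Definition adic_compact (R : idomainType) (pi : R) : Prop :=
  forall (I : Type) (U : I -> set R),
    (forall i, adic_open pi (U i)) -> (forall x, exists i, U i x) ->
    exists (n : nat) (f : 'I_n -> I), forall x, exists j, U (f j) x.

Definition compact_DVR (R : idomainType) : Prop :=
  exists pi : R, is_uniformizer pi /\ adic_compact pi.

Definition submodule (R : comRingType) (n : nat) (U : set 'rV[R]_n) : Prop :=
  [/\ U 0, (forall u v, U u -> U v -> U (u + v)) &
      (forall (c : R) u, U u -> U (c *: u))].

(* |R^n : U| = k : there are exactly k cosets of U *)
Definition has_index (R : comRingType) (n : nat) (U : set 'rV[R]_n) (k : nat) : Prop :=
  exists f : 'I_k -> 'rV[R]_n,
    (forall i j, U (f i - f j) -> i = j) /\ (forall v, exists i, U (v - f i)).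

Definition finite_index (R : comRingType) (n : nat) (U : set 'rV[R]_n) : Prop :=
  exists k, has_index U k.

(* the index |R^n : U| (meaningful when finite_index U) *)
Definition lindex (R : comRingType) (n : nat) (U : set 'rV[R]_n) : nat :=
  xget 0%N [set k | has_index U k].

Definition zeta_free (Rr : realType) (o : comRingType) (m : nat) (s : Rr) : \bar Rr :=
  \esum_(U in [set U : {classic set 'rV[o]_m} | submodule U /\ finite_index U])
     (((lindex U)%:R : Rr) `^ (- s))%:E.

Record quiver := Quiver {
  qv : nat;
  qa : nat;
  qtail : 'I_qa -> 'I_qv;
  qhead : 'I_qa -> 'I_qv }.

(* representation by free modules R^(qdim i), arrows acting on row vectors *)
Record qrep (R : comRingType) (Q : quiver) := QRep {
  qdim : 'I_(qv Q) -> nat;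
  qmap : forall e : 'I_(qa Q), 'M[R]_(qdim (qtail e), qdim (qhead e)) }.

Definition subrep (R : comRingType) (Q : quiver) (V : qrep R Q)
    (L : forall i : 'I_(qv Q), set 'rV[R]_(qdim V i)) : Prop :=
  (forall i, submodule (L i)) /\
  (forall (e : 'I_(qa Q)) v, L (qtail e) v -> L (qhead e) (v *m qmap V e)).

Definition zeta_rep (Rr : realType) (R : comRingType) (Q : quiver) (V : qrep R Q)
    (s : Rr) : \bar Rr :=
  \esum_(L in [set L : {classic forall i : 'I_(qv Q), set 'rV[R]_(qdim V i)} |
                  subrep L /\ forall i, finite_index (L i)])
     (\prod_(i < qv Q) (((lindex (L i))%:R : Rr) `^ (- s)))%:E.

(* vertex v_j is the ordinal j-1; arrow e : 'I_(a-1) goes v_(e+2) -> v_1 *)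

Lemma dstar_tail_proof (a : nat) (e : 'I_a.-1) : (e.+1 < a)%N.
Proof. by case: a e => [[]|a] e //=; rewrite ltnS. Qed.

Lemma dstar_head_proof (a : nat) (e : 'I_a.-1) : (0 < a)%N.
Proof. by case: a e => [[]|a]. Qed.

Definition dual_star (a : nat) : quiver :=
  @Quiver a a.-1 (fun e => Ordinal (dstar_tail_proof e))
                 (fun e => Ordinal (dstar_head_proof e)).

Definition Vstar (o : comRingType) (m a : nat) : qrep o (dual_star a) :=
  @QRep o (dual_star a) (fun _ => m) (fun _ => 1%:M).

(* Main.v *)
Require Import Defs.
From HB Require Import structures.
From mathcomp Require Import all_boot all_order all_algebra.
From mathcomp Require Import boolp classical_sets reals constructive_ereal ereal esum exp.
From mathcomp Require Import zify cardinality fsbigop.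
Import Order.TTheory GRing.Theory Num.Theory.
Local Open Scope ring_scope.
Local Open Scope classical_set_scope.
Set Implicit Arguments. Unset Strict Implicit. Unset Printing Implicit Defensive.

Section Idx.
Variables (o : comRingType) (m : nat).
Implicit Types (U : set 'rV[o]_m).

Lemma subm_opp U u : submodule U -> U u -> U (- u).
Proof. by case=> _ _ HZ Hu; rewrite -scaleN1r; apply: HZ. Qed.

Lemma subm_sub U u v : submodule U -> U u -> U v -> U (u - v).
Proof. move=> HU Hu Hv; case: (HU) => _ HD _; apply: HD => //; exact: subm_opp. Qed.

Lemma subm_sum U (I : Type) (r : seq I) (F : I -> 'rV[o]_m) :
  submodule U -> (forall i, U (F i)) -> U (\sum_(i <- r) F i).
Proof. by case=> H0 HD _ HF; apply: big_ind. Qed.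

Lemma has_index_cls U k : submodule U -> has_index U k ->
  exists (f : 'I_k -> 'rV[o]_m) (c : 'rV[o]_m -> 'I_k),
    (forall i j, U (f i - f j) -> i = j) /\ (forall v, U (v - f (c v))) /\
    (forall x y, c x = c y <-> U (x - y)).
Proof.
move=> HU [f [Hi Hc]]; have [c Hcv] := choice Hc.
exists f, c; split => //; split => // x y; split.
  move=> exy; have := subm_sub HU (Hcv x) (Hcv y).
  by rewrite exy opprB addrA addrNK.
move=> Hxy; apply: Hi.
have -> : f (c x) - f (c y) = (y - f (c y)) - (x - f (c x)) + (x - y).
  by rewrite opprB [y - _]addrC -!addrA [LHS]addrC; congr (_ + _); rewrite addKr addrCA subrr addr0.
case: (HU) => _ HD _; apply: HD => //; exact: subm_sub.
Qed.

Lemma has_indexF U (F : finType) (g : F -> 'rV[o]_m) :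
  (forall i j, U (g i - g j) -> i = j) -> (forall v, exists i, U (v - g i)) ->
  has_index U #|F|.
Proof.
move=> Hi Hc; exists (fun i => g (enum_val i)); split.
  by move=> i j /Hi /enum_val_inj.
by move=> v; have [i Hv] := Hc v; exists (enum_rank i); rewrite enum_rankK.
Qed.

Lemma has_index_uniq U k k' : submodule U -> has_index U k -> has_index U k' ->
  k = k'.
Proof.
have gen : forall k k', submodule U -> has_index U k -> has_index U k' -> (k <= k')%N.
  move=> {}k {}k' HU Hk Hk'.
  have [f [c [Hf [Hfc Hcl]]]] := has_index_cls HU Hk.
  have [f' [c' [Hf' [Hfc' Hcl']]]] := has_index_cls HU Hk'.
  have inj : injective (fun i => c' (f i)).
    by move=> i j /Hcl' /Hf.
  by have := leq_card _ inj; rewrite !card_ord.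
by move=> HU Hk Hk'; apply/eqP; rewrite eqn_leq !(gen _ _ HU).
Qed.

Lemma lindexE U k : submodule U -> has_index U k -> lindex U = k.
Proof.
move=> HU Hk; rewrite /lindex; apply: xget_unique => // k' Hk'.
exact: (has_index_uniq HU).
Qed.

Lemma finite_index_cls U (F : finType) (c : 'rV[o]_m -> F) : submodule U ->
  (forall x y, c x = c y <-> U (x - y)) -> finite_index U.
Proof.
move=> HU Hc.
pose P := fun i : F => `[< exists x, c x = i >].
have Hr : forall i : {i : F | P i}, exists x, c x = val i.
  by case=> i /= /asboolP.
have [r Hr'] := choice Hr.
exists #|{: {i : F | P i}}|; apply: (has_indexF (g := r)).
  move=> i j /Hc; rewrite !Hr' => /val_inj //.
move=> v.
have Pv : P (c v) by apply/asboolP; exists v.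
exists (exist _ (c v) Pv); apply/Hc; by rewrite Hr'.
Qed.

End Idx.

Section DVR.
Variables (o : idomainType) (pi : o).
Hypothesis Hpi : is_uniformizer pi.

Lemma ideal_gen (I : set o) : (exists x, I x /\ x != 0) ->
  exists g, [/\ I g, g != 0 & forall y, I y -> dvdr g y].
Proof.
case: Hpi => pi0 pinu Hdec [x [Ix x0]].
pose P n := `[< exists y u, [/\ I y, y != 0, u \is a GRing.unit & y = u * pi ^+ n] >].
have exP : exists n, P n.
  have [u [n [Uu ex]]] := Hdec x x0; exists n; apply/asboolP; exists x, u.
  by split.
case: (ex_minnP exP) => n0 /asboolP [g [u [Ig g0 Uu eg]]] Hmin.
exists g; split => // y Iy.
case: (eqVneq y 0) => [->|y0]; first by exists 0; rewrite mul0r.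
have [w [b [Uw ey]]] := Hdec y y0.
have /Hmin le : P b by apply/asboolP; exists y, w.
have [d ed] : exists d, b = (d + n0)%N by exists (b - n0)%N; rewrite subnK.
exists (w * u^-1 * pi ^+ d); rewrite ey eg ed exprD -!mulrA; congr (w * _).
by rewrite [pi ^+ d * (u * _)]mulrCA mulKr.
Qed.

Lemma pow_inj a b : pi ^+ a = pi ^+ b -> a = b.
Proof.
case: Hpi => pi0 pinu _.
wlog le : a b / (a <= b)%N.
  move=> W e; case: (leqP a b) => h; first exact: W.
  by apply/esym/W => //; apply: ltnW.
have [d ->] : exists d, b = (a + d)%N by exists (b - a)%N; rewrite subnKC.
rewrite exprD -{1}[pi ^+ a]mulr1 => /mulfI.
rewrite expf_neq0 // => /(_ isT) e.
case: d e => [|d]; first by rewrite addn0.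
rewrite exprS => /esym e; case/negP: pinu; apply/unitrPr.
by exists (pi ^+ d).
Qed.

Variable m : nat.
Implicit Types (L U : set 'rV[o]_m).

Lemma nonzero_axis L (i : 'I_m) : submodule L -> finite_index L ->
  exists c, c != 0 /\ L (c *: delta_mx 0 i).
Proof.
move=> HL [k Hk].
have [f [c [_ [_ Hcl]]]] := has_index_cls HL Hk.
pose g := fun j : 'I_k.+1 => c (pi ^+ j *: (delta_mx 0 i : 'rV[o]_m)).
have ninj : ~ injective g.
  by move=> inj; have := leq_card _ inj; rewrite !card_ord ltnn.
have [j1 [j2 [e ne]]] : exists j1 j2, g j1 = g j2 /\ j1 <> j2.
  apply: contrapT => H; apply: ninj => j1 j2 e; apply: contrapT => ne.
  by apply: H; exists j1, j2.
exists (pi ^+ j1 - pi ^+ j2); split.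
  rewrite subr_eq0; apply/eqP => /pow_inj ej; apply: ne; exact: val_inj.
by rewrite scalerBl; apply/Hcl.
Qed.

Definition Lat L (i : nat) (v : 'rV[o]_m) :=
  L v /\ forall j : 'I_m, (j < i)%N -> v 0 j = 0.

Lemma col_gen L (i : 'I_m) : submodule L -> finite_index L ->
  exists b, [/\ Lat L i b, b 0 i != 0 &
                forall v, Lat L i v -> dvdr (b 0 i) (v 0 i)].
Proof.
move=> HL Hf.
have [c [c0 Lc]] := nonzero_axis i HL Hf.
have [g [[v [Lv ev]] g0 Hg]] :
    exists g, [/\ (fun y => exists v, Lat L i v /\ y = v 0 i) g, g != 0 &
      forall y, (fun y => exists v, Lat L i v /\ y = v 0 i) y -> dvdr g y].
  apply: ideal_gen; exists c; split => //; exists (c *: delta_mx 0 i); split.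
    split => // j ji; rewrite !mxE /=.
    by rewrite (_ : (j == i) = false) ?mulr0 //; apply/negbTE; rewrite -val_eqE /= neq_ltn ji.
  by rewrite !mxE !eqxx mulr1.
exists v; rewrite -ev; split => // w Lw; apply: Hg; by exists w.
Qed.

Lemma basis_exists L : submodule L -> finite_index L ->
  exists M : 'M[o]_m, (forall x : 'rV[o]_m, x *m M = 0 -> x = 0) /\
                      (forall v, L v <-> exists x, v = x *m M).
Proof.
move=> HL Hf.
have [B HB] := choice (fun i => col_gen i HL Hf).
pose M := \matrix_i (B i).
have ME i j : M i j = B i 0 j by rewrite mxE.
have rowM i : row i M = B i by rewrite rowK.
exists M; split.
  move=> x Hx.
  have dM : \det M != 0.
    rewrite -det_tr det_trig.
      apply/prodf_neq0 => i _; rewrite mxE ME; by case: (HB i).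
    apply/forallP => i; apply/forallP => j; apply/implyP => ij.
    rewrite mxE ME; case: (HB j) => [[_ Hz] _ _]; by rewrite Hz.
  have := congr1 (mulmx^~ (\adj M)) Hx.
  rewrite -mulmxA mul_mx_adj mul_mx_scalar mul0mx => /eqP.
  by rewrite scalemx_eq0 (negbTE dM) => /eqP.
move=> v; split; last first.
  move=> [x ->]; rewrite mulmx_sum_row; apply: subm_sum => // i.
  rewrite rowM; case: HL => _ _ HZ; apply: HZ; by case: (HB i) => [[]].
move=> Lv.
have key : forall k v, L v -> (forall j : 'I_m, (j < m - k)%N -> v 0 j = 0) ->
    exists x, v = x *m M.
  elim=> [|k IH] w Lw Hw.
    exists 0; rewrite mul0mx; apply/rowP => j; rewrite mxE Hw //.
    by rewrite subn0 ltn_ord.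
  case: (leqP m k) => hmk.
    apply: IH => // j; have -> : (m - k = 0)%N by lia.
    by [].
  have hi : (m - k.+1 < m)%N by lia.
  pose i := Ordinal hi.
  have [[Lb Hb0] bi0 Hdiv] := HB i.
  have [c ec] : dvdr (B i 0 i) (w 0 i).
    apply: Hdiv; split => // j ji; apply: Hw => /=; exact: ji.
  have Lw' : L (w - c *: B i).
    apply: subm_sub => //; case: (HL) => _ _ HZ; exact: HZ.
  have [x ex] : exists x, w - c *: B i = x *m M.
    apply: IH => // j jk; rewrite !mxE.
    case: (ltngtP j i) => ji.
    - by rewrite Hw ?Hb0 ?mulr0 ?subr0 //=; apply: leq_trans ji _; lia.
    - by exfalso; move: ji jk => /=; lia.
    - have -> : j = i by exact: val_inj.
      by rewrite ec subrr.
  exists (x + c *: delta_mx 0 i).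
  rewrite mulmxDl -ex -scalemxAl -rowE rowM.
  by rewrite subrK.
apply: (key m) => // j; rewrite subnn.
by [].
Qed.

End DVR.

Section Coupling.
Variables (o : comRingType) (m : nat) (L : set 'rV[o]_m) (M : 'M[o]_m).
Hypothesis Minj : forall x : 'rV[o]_m, x *m M = 0 -> x = 0.
Hypothesis LM : forall v, L v <-> exists x, v = x *m M.
Implicit Types (U V : set 'rV[o]_m).

Definition Im U := [set v : 'rV[o]_m | exists x : 'rV[o]_m, U x /\ v = x *m M].
Definition Pre V := [set x : 'rV[o]_m | V (x *m M)].

Lemma Minj' (x y : 'rV[o]_m) : x *m M = y *m M -> x = y.
Proof. by move=> e; apply/eqP; rewrite -subr_eq0; apply/eqP/Minj; rewrite mulmxBl e subrr. Qed.

Lemma Im_sub U : submodule U -> submodule (Im U).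
Proof.
case=> H0 HD HZ; split.
- by exists 0; rewrite mul0mx.
- move=> _ _ [x [Ux ->]] [y [Uy ->]]; exists (x + y); split; [exact: HD|].
  by rewrite mulmxDl.
- move=> c _ [x [Ux ->]]; exists (c *: x); split; [exact: HZ|].
  by rewrite scalemxAl.
Qed.

Lemma Im_subL U : Im U `<=` L.
Proof. by move=> _ [x [_ ->]]; apply/LM; exists x. Qed.

Lemma ImE U w : Im U (w *m M) <-> U w.
Proof.
split; last by move=> Uw; exists w.
by move=> [x [Ux /Minj' ->]].
Qed.

Lemma Pre_sub V : submodule V -> submodule (Pre V).
Proof.
case=> H0 HD HZ; split.
- by rewrite /Pre /= mul0mx.
- by move=> x y Vx Vy; rewrite /Pre /= mulmxDl; apply: HD.
- by move=> c x Vx; rewrite /Pre /= -scalemxAl; apply: HZ.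
Qed.

Lemma ImPre V : V `<=` L -> Im (Pre V) = V.
Proof.
move=> VL; apply/seteqP; split.
  by move=> _ [x [Vx ->]].
move=> v Vv; have [x ex] := (LM v).1 (VL _ Vv).
by exists x; split => //; rewrite /Pre /= -ex.
Qed.

Lemma Im_inj U U' : Im U = Im U' -> U = U'.
Proof.
move=> e; apply/seteqP; split => x Ux.
  by apply/(ImE U'); rewrite -e; apply/ImE.
by apply/(ImE U); rewrite e; apply/ImE.
Qed.

Lemma Im_index U k l : submodule L -> submodule U -> has_index L k ->
  has_index U l -> has_index (Im U) (k * l).
Proof.
move=> HL HU [f [Hf Hfc]] [g [Hg Hgc]].
have := @has_indexF _ _ (Im U) ('I_k * 'I_l)%type
   (fun p => f p.1 + g p.2 *m M).
rewrite card_prod !card_ord; apply.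
  move=> [i j] [i' j'] /= H.
  have HL1 : L (f i - f i').
    have -> : f i - f i' = (f i + g j *m M - (f i' + g j' *m M)) - (g j - g j') *m M.
      by rewrite mulmxBl opprD addrACA addrK.
    apply: subm_sub => //; first exact: (@Im_subL U).
    by apply/LM; exists (g j - g j').
  have ei := Hf _ _ HL1; subst i'.
  move: H; rewrite opprD addrACA subrr add0r -mulmxBl => /ImE /Hg ->.
  by [].
move=> v; have [i Hi] := Hfc v; have [w ew] := (LM _).1 Hi.
have [j Hj] := Hgc w; exists (i, j) => /=.
rewrite opprD addrA ew -mulmxBl; exact/ImE.
Qed.

Lemma Im_finite U : submodule U -> finite_index (Im U) -> finite_index U.
Proof.
move=> HU [n Hn].
have [f [c [_ [_ Hcl]]]] := has_index_cls (Im_sub HU) Hn.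
apply: (@finite_index_cls _ _ U _ (fun x => c (x *m M))) => // x y.
by rewrite Hcl -mulmxBl; exact: ImE.
Qed.

End Coupling.

Section ESum.
Local Open Scope ereal_scope.
Variable (R : realType).

Lemma fsumZl (T : choiceType) (A : set T) (f : T -> \bar R) (c : \bar R) :
  finite_set A -> (forall i, A i -> 0 <= f i) ->
  \sum_(i \in A) (c * f i) = c * \sum_(i \in A) f i.
Proof.
move=> fA f0; rewrite !fsbig_finite //= [in LHS]big_seq [in RHS]big_seq.
by rewrite ge0_sume_distrr // => i; rewrite in_fset_set // inE => /f0.
Qed.

Lemma esumZl (T : choiceType) (I : set T) (f : T -> \bar R) (c : \bar R) :
  0 <= c -> (forall i, I i -> 0 <= f i) ->
  \esum_(i in I) (c * f i) = c * \esum_(i in I) f i.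
Proof.
move=> c0 f0.
case: (pselect (exists i, I i /\ 0 < f i)) => [[i [Ii fi0]]|nz]; last first.
  have fz : forall i, I i -> f i = 0.
    move=> i Ii; apply/eqP; rewrite eq_le f0 // andbT leNgt; apply/negP => h.
    by apply: nz; exists i.
  rewrite !esum1 ?mule0 // => j Ij; by rewrite fz ?mule0.
move: c c0; case=> [r r0| _ | //]; last first.
  have hp : 0 < \esum_(i in I) f i.
    apply: (lt_le_trans fi0); apply: esum_ge; exists [set i]; first by split => // j ->.
    by rewrite fsbig_set1.
  rewrite (gt0_mulye hp).
  apply/eqP; rewrite eq_le leey /=.
  apply: esum_ge; exists [set i]; first by split => // j ->.
  by rewrite fsbig_set1 gt0_mulye.
move: r0; rewrite lee_fin le0r => /orP[/eqP->|rp].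
  rewrite mul0e esum1 // => j _; by rewrite mul0e.
rewrite /esum -ereal_sup_pZl //; congr ereal_sup; apply/seteqP; split => y.
  move=> [A HA <-]; exists (\sum_(x \in A) f x); first by exists A.
  rewrite fsumZl //; first by case: HA.
  by move=> j /(proj2 HA) /f0.
move=> [_ [A HA <-] <-]; exists A => //; rewrite fsumZl //; first by case: HA.
by move=> j /(proj2 HA) /f0.
Qed.

Lemma esumZr (T : choiceType) (I : set T) (f : T -> \bar R) (c : \bar R) :
  0 <= c -> (forall i, I i -> 0 <= f i) ->
  \esum_(i in I) (f i * c) = (\esum_(i in I) f i) * c.
Proof.
move=> c0 f0; rewrite [RHS]muleC -esumZl //; apply: eq_esum => i _; exact: muleC.
Qed.

Lemma esum_prod2 (T1 T2 : choiceType) (A : set T1) (B : set T2)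
    (f : T1 -> \bar R) (g : T2 -> \bar R) :
  (forall i, A i -> 0 <= f i) -> (forall j, B j -> 0 <= g j) ->
  \esum_(k in A `*`` (fun _ => B)) (f k.1 * g k.2) =
  (\esum_(i in A) f i) * (\esum_(j in B) g j).
Proof.
move=> f0 g0; rewrite -(@esum_esum _ _ _ A (fun=> B) (fun i j => f i * g j)); last by move=> i j Ai Bj; rewrite mule_ge0 ?f0 ?g0.
rewrite -esumZr //; last exact: esum_ge0.
by apply: eq_esum => i Ai; rewrite esumZl // f0.
Qed.

Definition tup_cons (T : Type) n (p : T * ('I_n -> T)) : 'I_n.+1 -> T :=
  fun i => if unlift ord0 i is Some j then p.2 j else p.1.

Lemma esum_tuple n (T : choiceType) (A : set T) (h : T -> \bar R) :
  (forall t, A t -> 0 <= h t) ->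
  \esum_(F in [set F : {classic 'I_n -> T} | forall j, A (F j)])
     \prod_(j < n) h (F j) = \prod_(j < n) \esum_(t in A) h t.
Proof.
move=> h0; elim: n => [|n IH].
  have F0 : 'I_0 -> T by case.
  rewrite big_ord0.
  have -> : [set F : {classic 'I_0 -> T} | forall j, A (F j)] = [set F0].
    apply/seteqP; split => F _ /=; last by case.
    by apply/funext; case.
  by rewrite esum_set1 big_ord0.
rewrite (reindex_esum (A `*`` (fun _ => [set F : {classic 'I_n -> T} | forall j, A (F j)]))
   _ (@tup_cons T n)); last first.
  split.
  - move=> [t F] [/= At AF] i; rewrite /tup_cons /=.
    by case: unliftP => [j|] _.
  - move=> [t F] [t' F'] _ _ /= e.
    have e0 := congr1 (fun G => G ord0) e; rewrite /= /tup_cons /= !unlift_none in e0.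
    have e1 : F = F'.
      apply/funext => j; have := congr1 (fun G => G (lift ord0 j)) e.
      by rewrite /= /tup_cons /= !liftK.
    by rewrite e0 e1.
  - move=> G /= AG; exists (G ord0, fun j => G (lift ord0 j)).
      by split => //= j.
    apply/funext => i; rewrite /tup_cons /=.
    by case: unliftP => [j|] ->.
rewrite big_ord_recl -IH -esum_prod2 //; last first.
  by move=> F AF; apply: prode_ge0 => j _; apply: h0.
apply: eq_esum => -[t F] _ /=; rewrite big_ord_recl /tup_cons /= unlift_none.
congr (_ * _); apply: eq_bigr => j _; by rewrite liftK.
Qed.

End ESum.

Definition Mof (o : comRingType) m (L : set 'rV[o]_m) : 'M[o]_m :=
  xget 1%:M [set M | (forall x : 'rV[o]_m, x *m M = 0 -> x = 0) /\
                     (forall v, L v <-> exists x, v = x *m M)].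

Unset Implicit Arguments.
Local Open Scope ring_scope.

Theorem proposition3p9 (Rr : realType) (o : idomainType) (m a : nat) (s : Rr) :
  compact_DVR o -> (0 < a)%N ->
  zeta_rep (Vstar o m a) s =
  (zeta_free o m (a%:R * s) * \prod_(j < a.-1) zeta_free o m s)%E.
Proof.
move=> [pi [Hpi _]]; case: a => [//|n] _ /=.
pose T := {classic set 'rV[o]_m}.
pose Fin := [set U : T | submodule U /\ finite_index U].
have BM : forall L0 : T, Fin L0 ->
    (forall x : 'rV[o]_m, x *m Mof L0 = 0 -> x = 0) /\
    (forall v, L0 v <-> exists x, v = x *m Mof L0).
  move=> L0 [HL Hf]; exact: (xgetPex 1%:M (basis_exists Hpi HL Hf)).
pose e := fun p : T * {classic 'I_n -> T} =>
  (tup_cons (p.1, fun j => Im (Mof p.1) (p.2 j)) : {classic 'I_n.+1 -> T}).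
rewrite /zeta_rep.
rewrite (reindex_esum (Fin `*`` (fun _ => [set F : {classic 'I_n -> T} | forall j, Fin (F j)])) _ e); last first.
  split.
  - move=> [L0 U] [/= FL0 FU]; have [Minj LM] := BM L0 FL0.
    split; [split|].
    + move=> i; rewrite /e /tup_cons /=; case: unliftP => [j|] _.
        exact: Im_sub (FU j).1.
      exact: FL0.1.
    + move=> k v /=.
      have -> : Ordinal (dstar_tail_proof k) = lift ord0 k by apply: val_inj.
      have -> : Ordinal (dstar_head_proof k) = ord0 by apply: val_inj.
      rewrite /e /tup_cons /= liftK unlift_none /= mulmx1.
      exact: (Im_subL LM).
    + move=> i; rewrite /e /tup_cons /=; case: unliftP => [j|] _; last exact: FL0.2.
      have [k Hk] := FL0.2; have [l Hl] := (FU j).2; exists (k * l)%N.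
      exact: (Im_index Minj LM FL0.1 (FU j).1 Hk Hl).
  - move=> [L0 U] [L0' U'] /set_mem [/= FL0 FU] _ /= H.
    have e0 : L0 = L0'.
      by have := congr1 (fun G => G ord0) H; rewrite /e /tup_cons /= ?unlift_none.
    subst L0'; have [Minj LM] := BM L0 FL0; congr (_, _).
    apply/funext => j; have := congr1 (fun G => G (lift ord0 j)) H.
    rewrite /e /tup_cons /= !liftK; exact: (Im_inj Minj).
  - move=> L [[HLsub HLarr] HLfin].
    have FL0 : Fin (L ord0) by split; [exact: HLsub|exact: HLfin].
    have [Minj LM] := BM _ FL0.
    have Sub : forall j, L (lift ord0 j) `<=` L ord0.
      move=> j v Lv; have := HLarr j v; rewrite /=.
      have -> : Ordinal (dstar_tail_proof j) = lift ord0 j by apply: val_inj.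
      have -> : Ordinal (dstar_head_proof j) = ord0 by apply: val_inj.
      by rewrite mulmx1 => /(_ Lv).
    exists (L ord0, fun j => Pre (Mof (L ord0)) (L (lift ord0 j))).
      split => //= j; split; first exact: Pre_sub (HLsub _).
      apply: (Im_finite Minj); first exact: Pre_sub (HLsub _).
      rewrite (ImPre LM (Sub j)); exact: HLfin.
    apply/funext => i; rewrite /e /tup_cons /=.
    case: unliftP => [j|] -> //. apply: (ImPre LM). exact: (Sub j).
have lidx : forall L0 U, Fin L0 -> Fin U ->
    lindex (Im (Mof L0) U) = (lindex L0 * lindex U)%N.
  move=> L0 U FL0 FU; have [Minj LM] := BM L0 FL0.
  have [k Hk] := FL0.2; have [l Hl] := FU.2.
  rewrite (lindexE FL0.1 Hk) (lindexE FU.1 Hl); apply: lindexE.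
    exact: Im_sub FU.1.
  apply: (Im_index Minj LM) => //; [exact: FL0.1 | exact: FU.1].
rewrite (eq_esum (b := fun p : T * {classic 'I_n -> T} =>
   (((lindex p.1)%:R `^ (- (n.+1%:R * s)))%:E *
    \prod_(j < n) ((lindex (p.2 j))%:R `^ (-s))%:E)%E)); last first.
  move=> [L0 U] [/= FL0 FU].
  rewrite big_ord_recl /e /tup_cons /= unlift_none.
  under eq_bigr do rewrite liftK lidx //.
  rewrite prodEFin -EFinM; congr EFin.
  under eq_bigr do rewrite natrM powRM //.
  rewrite big_split /= prodr_const card_ord mulrA; congr (_ * _).
  rewrite -exprS -powR_mulrn ?powR_ge0 // -powRrM; congr (_ `^ _).
  by rewrite mulNr mulrC.
rewrite (@esum_prod2 _ _ _ Fin [set F : {classic 'I_n -> T} | forall j, Fin (F j)]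
  (fun L0 : T => ((lindex L0)%:R `^ (- (n.+1%:R * s)))%:E)
  (fun F : {classic 'I_n -> T} => (\prod_(j < n) ((lindex (F j))%:R `^ (-s))%:E)%E)); last first.
- by move=> F AF; apply: prode_ge0 => j _; rewrite lee_fin powR_ge0.
- by move=> L0 _; rewrite lee_fin powR_ge0.
rewrite (@esum_tuple Rr n T Fin (fun U : T => ((lindex U)%:R `^ (-s))%:E)) //.
Qed.
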